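(* Let $A$ be an $m$-dimensional permutation array of size $n_1\times\cdots\times n_m$, index set $\Lambda=[n_1]\times\cdots\times[n_m]$, and order $n$. If $|\mathcal{H}_A|-|H_\Lambda|<n-1$, then there is an $n_1\times\cdots\times n_m$ window in the periodic extension of $A$ which has a repeated difference vector.
   Context: For $n\in\mathbb{N}$, $[n]=\{1,\dots,n\}$; $m\ge2$, all $n_i\ge2$. A binary array $A:\Lambda\to\{0,1\}$ is an $m$-dimensional permutation array if there exist $k$ with $1\le k<m$ and a bijection $\varphi:[n_1]\times\cdots\times[n_k]\to[n_{k+1}]\times\cdots\times[n_m]$ such that $A(a_1,\dots,a_m)=1$ iff $\varphi(a_1,\dots,a_k)=(a_{k+1},\dots,a_m)$; points with value 1 are dots; the order is $n=n_1\cdots n_k=n_{k+1}\cdots n_m$. The periodic extension $\mathbb{A}:\mathbb{Z}^m\to\{0,1\}$ is $\mathbb{A}(a_1,\dots,a_m)=A(a_1',\dots,a_m')$ with $a_i'\in[n_i]$, $a_i'\equiv a_i\pmod{n_i}$; an $n_1\times\cdots\times n_m$ window is the restriction of $\mathbb{A}$ to a box $\prod_i\{k_i,\dots,k_i+n_i-1\}$, $k_i\in\mathbb{Z}$. The difference vector from dot $(a_i)$ to a distinct dot $(w_i)$ is $\langle w_i-a_i\rangle_i\in\mathbb{Z}^m$, the toroidal vector is $\langle (w_i-a_i)\bmod n_i\rangle_i$; a window has a repeated difference vector if two distinct ordered pairs of distinct dots in it have the same difference vector. $\mathcal{H}_A$ is the multiset (counted with multiplicity over ordered pairs of distinct dots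 of $A$) of toroidal vectors $\langle h_1,\dots,h_m\rangle$ of $A$ with $h_i=n_i/2$ for some $i$. With $Z_1=\mathbb{Z}_{n_1}\times\cdots\times\mathbb{Z}_{n_k}$, $Z_2=\mathbb{Z}_{n_{k+1}}\times\cdots\times\mathbb{Z}_{n_m}$, $T_\Lambda=(Z_1\times Z_2)\setminus((Z_1\times\{0\})\cup(\{0\}\times Z_2))$ and $H_\Lambda=\{\langle h_1,\dots,h_m\rangle\in T_\Lambda: h_i=n_i/2\text{ for some }i\in[m]\}$ (a set). *)

(* Defs.v *)
(* Coordinates are 0-based: [n_i] = {1..n_i} is rendered as
   {0..n_i-1}; the shift is harmless (translation-invariant notions only). *)
From mathcomp Require Import all_boot all_order all_algebra.
Set Implicit Arguments. Unset Strict Implicit. Unset Printing Implicit Defensive.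

Fixpoint boxseq (l : seq nat) : seq (seq nat) :=
  match l with
  | [::] => [:: [::]]
  | n :: l' => [seq x :: s | x <- iota 0 n, s <- boxseq l']
  end.

Definition is_perm_array (ns : seq nat) (A : seq nat -> bool)
    (k : nat) (phi : seq nat -> seq nat) : Prop :=
  [/\ 1 <= k < size ns,
      {in boxseq (take k ns), forall x, phi x \in boxseq (drop k ns)},
      {in boxseq (take k ns) &, injective phi},
      {in boxseq (drop k ns), forall y, exists2 x, x \in boxseq (take k ns) & phi x = y}
    & {in boxseq ns, forall a, A a = (phi (take k a) == drop k a)}].

Definition parray_order (ns : seq nat) (k : nat) : nat := \prod_(x <- take k ns) x.

Definition dots (ns : seq nat) (A : seq nat -> bool) : seq (seq nat) :=
  [seq a <- boxseq ns | A a].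

Definition toroidal (ns : seq nat) (a w : seq nat) : seq nat :=
  [seq (nth 0 w i + nth 0 ns i - nth 0 a i) %% nth 0 ns i | i <- iota 0 (size ns)].

Definition has_half (ns : seq nat) (h : seq nat) : bool :=
  has (fun i => (nth 0 h i).*2 == nth 0 ns i) (iota 0 (size ns)).

(* |H_A| : multiset count over ordered pairs of distinct dots *)
Definition card_HA (ns : seq nat) (A : seq nat -> bool) : nat :=
  size [seq p <- [seq (a, w) | a <- dots ns A, w <- dots ns A]
         | (p.1 != p.2) && has_half ns (toroidal ns p.1 p.2)].

Definition in_T (ns : seq nat) (k : nat) (h : seq nat) : bool :=
  has (fun x => x != 0) (take k h) && has (fun x => x != 0) (drop k h).

Definition card_HL (ns : seq nat) (k : nat) : nat :=
  size [seq h <- boxseq ns | in_T ns k h && has_half ns h].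

Definition periodic_ext (ns : seq nat) (A : seq nat -> bool) (x : seq int) : bool :=
  A [seq absz (intdiv.modz (nth (0:int) x i) (Posz (nth 0 ns i))) | i <- iota 0 (size ns)].

Definition in_window (ns : seq nat) (c x : seq int) : bool :=
  (size x == size ns) &&
  all (fun i => (nth (0:int) c i <= nth (0:int) x i)%R && (nth (0:int) x i < nth (0:int) c i + (nth 0 ns i)%:Z)%R)
      (iota 0 (size ns)).

Definition diffv (ns : seq nat) (p q : seq int) : seq int :=
  [seq (nth (0:int) q i - nth (0:int) p i)%R | i <- iota 0 (size ns)].

Definition window_has_repeat (ns : seq nat) (A : seq nat -> bool) (c : seq int) : Prop :=
  exists p q p' q' : seq int,
    [/\ [&& in_window ns c p, in_window ns c q, in_window ns c p' & in_window ns c q'],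
        [&& periodic_ext ns A p, periodic_ext ns A q, periodic_ext ns A p'
          & periodic_ext ns A q'],
        p != q /\ p' != q',
        (p, q) != (p', q')
      & diffv ns p q = diffv ns p' q'].

(* Main.v *)
Require Import Defs.
From mathcomp Require Import all_boot all_order all_algebra.
From mathcomp Require Import zify.
Set Implicit Arguments. Unset Strict Implicit. Unset Printing Implicit Defensive.

Lemma mem_boxseq_cons n l x :
  x \in boxseq (n :: l) = (if x is y :: x' then (y < n) && (x' \in boxseq l) else false).
Proof.
apply/allpairsP/idP => [[[y s] /= [Hy Hs ->]]|].
  by rewrite Hs andbT; move: Hy; rewrite mem_iota add0n.
case: x => // y x' /andP[Hy Hx]; exists (y, x'); split => //=.
by rewrite mem_iota add0n.
Qed.

Lemma boxseqP l x : reflect (size x = size l /\ forall i, i < size l -> nth 0 x i < nth 0 l i)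
   (x \in boxseq l).
Proof.
elim: l x => [|n l IH] x /=.
  rewrite inE; case: x => [|y x]; [by left|by right; case].
rewrite mem_boxseq_cons; case: x => [|y x]; first by right; case.
apply: (iffP andP) => [[Hy /IH [Hs Hn]]|[[Hs] Hn]]; split.
- by rewrite /= Hs.
- by case => //= i /Hn.
- exact: (Hn 0).
- by apply/IH; split => // i Hi; apply: (Hn i.+1).
Qed.

Lemma uniq_boxseq l : uniq (boxseq l).
Proof.
elim: l => //= n l IH; apply: allpairs_uniq => //; first exact: iota_uniq.
by move=> [a b] [c d] _ _ /= [-> ->].
Qed.

Lemma size_boxseq l : size (boxseq l) = \prod_(x <- l) x.
Proof.
elim: l => [|n l IH]; first by rewrite big_nil.
by rewrite /= size_allpairs size_iota big_cons IH.
Qed.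

Lemma boxseq_cat l1 l2 u v : size u = size l1 ->
  (u ++ v \in boxseq (l1 ++ l2)) = (u \in boxseq l1) && (v \in boxseq l2).
Proof.
elim: l1 u => [|n l1 IH] [|y u] // Hs.
rewrite cat_cons !mem_boxseq_cons IH; last by case: Hs.
by rewrite andbA.
Qed.
Definition rr (n c x : nat) := if c <= x then x else x + n.

Lemma oneD n a w a' w' h : a < n -> w < n -> a' < n -> w' < n ->
  h = (if a <= w then w - a else w + n - a) ->
  h = (if a' <= w' then w' - a' else w' + n - a') ->
  h.*2 != n ->
  exists c, c < n /\ rr n c w + rr n c a' = rr n c w' + rr n c a.
Proof.
rewrite -addnn /rr => Ha Hw Ha' Hw' H1 H2 Hh.
have [Hlt|Hge] := ltnP (h + h) n.
  have [Hc|Hc] := ltnP ((if a <= a' then a' - a else a' + n - a) + h) n.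
    exists a; split => //; move: H1 H2 Hc; repeat case: ifP; lia.
  exists a'; split => //; move: H1 H2 Hc; repeat case: ifP; lia.
have [Hc|Hc] := ltnP ((if w <= w' then w' - w else w' + n - w) + (n - h)) n.
  exists w; split => //; move: H1 H2 Hc Hh; repeat case: ifP; lia.
exists w'; split => //; move: H1 H2 Hc Hh; repeat case: ifP; lia.
Qed.
Lemma boxseq_td ns k x : x \in boxseq ns ->
  take k x \in boxseq (take k ns) /\ drop k x \in boxseq (drop k ns).
Proof.
move=> Hx; have Hs : size x = size ns by case/boxseqP: Hx.
move: Hx; rewrite -{1}(cat_take_drop k x) -{1}(cat_take_drop k ns) boxseq_cat.
  by case/andP.
by rewrite !size_take Hs.
Qed.

Lemma boxseq_cat_in ns k u v : k <= size ns -> u \in boxseq (take k ns) ->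
  v \in boxseq (drop k ns) -> u ++ v \in boxseq ns.
Proof.
move=> Hk Hu Hv; rewrite -(cat_take_drop k ns) boxseq_cat ?Hu ?Hv //.
by case/boxseqP: Hu.
Qed.

Lemma count_pairs (T : eqType) (s : seq T) : uniq s ->
  count (fun p : T * T => p.1 != p.2) [seq (x, y) | x <- s, y <- s] = size s * (size s).-1.
Proof.
move=> Us.
suff H : forall s1, {subset s1 <= s} ->
  count (fun p : T * T => p.1 != p.2) [seq (x, y) | x <- s1, y <- s] = size s1 * (size s).-1.
  exact: H.
elim=> [|x s1 IH] //= Hsub.
rewrite count_cat IH; last by move=> y Hy; apply: Hsub; rewrite inE Hy orbT.
rewrite count_map mulSn; congr (_ + _).
have Hx : x \in s by apply: Hsub; rewrite inE eqxx.
have := count_predC (pred1 x) s; have := count_uniq_mem x Us; rewrite Hx.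
move=> H1 H2.
rewrite (@eq_count _ _ (predC (pred1 x))); first by move: H1 H2 => /= ->; lia.
by move=> y /=; rewrite eq_sym.
Qed.

Lemma count_split (T : Type) (a b : pred T) s :
  count a s = count (fun x => a x && b x) s + count (fun x => a x && ~~ b x) s.
Proof. by elim: s => //= x s ->; case: (a x); case: (b x) => /=; lia. Qed.
Lemma seq_choice (P : nat -> nat -> Prop) m :
  (forall i, i < m -> exists c, P i c) ->
  exists cs, size cs = m /\ forall i, i < m -> P i (nth 0 cs i).
Proof.
elim: m => [|m IH] H; first by exists [::].
have [cs [Hsz Hcs]] : exists cs, size cs = m /\ forall i, i < m -> P i (nth 0 cs i).
  by apply: IH => i Hi; apply: H; apply: ltnW.
have [c Hc] := H m (ltnSn m).
exists (rcons cs c); split; first by rewrite size_rcons Hsz.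
move=> i; rewrite ltnS leq_eqVlt nth_rcons Hsz.
case/orP => [/eqP ->|Hi]; first by rewrite ltnn eqxx.
by rewrite Hi; apply: Hcs.
Qed.

Lemma tor_nth_eq n a w : a < n -> w < n ->
  (w + n - a) %% n = if a <= w then w - a else w + n - a.
Proof.
move=> Ha Hw; case: ifP => H.
  by rewrite -addnBAC // modnDr modn_small //; lia.
by rewrite modn_small //; lia.
Qed.

Lemma nth_tor ns a w i : i < size ns ->
  nth 0 (toroidal ns a w) i = (nth 0 w i + nth 0 ns i - nth 0 a i) %% nth 0 ns i.
Proof.
by move=> Hi; rewrite /toroidal (nth_map 0) ?size_iota // nth_iota.
Qed.

Lemma size_tor ns a w : size (toroidal ns a w) = size ns.
Proof. by rewrite /toroidal size_map size_iota. Qed.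
Section Geom.
Variables (ns : seq nat) (cs : seq nat).
Let m := size ns.
Hypothesis Hcs : forall i, i < m -> nth 0 cs i < nth 0 ns i.
Definition R (x : seq nat) i := rr (nth 0 ns i) (nth 0 cs i) (nth 0 x i).
Definition lift (x : seq nat) : seq int := [seq Posz (R x i) | i <- iota 0 m].
Definition corner : seq int := [seq Posz (nth 0 cs i) | i <- iota 0 m].

Lemma nth_lift x i : i < m -> nth 0%R (lift x) i = Posz (R x i).
Proof. by move=> Hi; rewrite /lift (nth_map 0) ?size_iota // nth_iota. Qed.

Lemma lift_window x : x \in boxseq ns -> in_window ns corner (lift x).
Proof.
case/boxseqP => Hs Hx; rewrite /in_window /lift size_map size_iota eqxx /=.
apply/allP => i; rewrite mem_iota add0n => /= Hi.
rewrite nth_lift // /corner (nth_map 0) ?size_iota // nth_iota // add0n.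
have := Hx i Hi; have := Hcs Hi; rewrite /R /rr lez_nat -PoszD ltz_nat -[(ns`_i)%R]/(nth 0 ns i).
case: ifP => ?; lia.
Qed.

Lemma lift_periodic A x : x \in dots ns A -> periodic_ext ns A (lift x).
Proof.
rewrite mem_filter => /andP[HA Hx]; case/boxseqP: (Hx) => Hs Hlt.
rewrite /periodic_ext; move: HA; congr (is_true (A _)).
rewrite -[LHS](mkseq_nth 0 x) /mkseq Hs; apply/eq_in_map => i; rewrite mem_iota add0n => Hi.
rewrite nth_lift // modz_nat absz_nat /R /rr; case: ifP => _.
  by rewrite modn_small //; apply: Hlt.
by rewrite modnDr modn_small //; apply: Hlt.
Qed.

Lemma lift_inj x y : x \in boxseq ns -> y \in boxseq ns -> lift x = lift y -> x = y.
Proof.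
case/boxseqP => Hsx Hx; case/boxseqP => Hsy Hy Heq.
apply: (@eq_from_nth _ 0); first by rewrite Hsx Hsy.
move=> i; rewrite Hsx => Hi.
have := congr1 (fun s => nth 0%R s i) Heq; rewrite /= !nth_lift // => [[]].
have := Hx i Hi; have := Hy i Hi; rewrite /R /rr; case: ifP => ?; case: ifP => ?; lia.
Qed.
End Geom.
Lemma geom ns A a w a' w' :
  all (fun x => 0 < x) ns ->
  a \in dots ns A -> w \in dots ns A -> a' \in dots ns A -> w' \in dots ns A ->
  a != w -> a' != w' -> (a, w) != (a', w') ->
  toroidal ns a w = toroidal ns a' w' -> ~~ has_half ns (toroidal ns a w) ->
  exists c : seq int, size c = size ns /\ window_has_repeat ns A c.
Proof.
move=> Hpos Ha Hw Ha' Hw' Haw Haw' Hne Ht Hh.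
have Hb : forall x, x \in dots ns A -> x \in boxseq ns by move=> x; rewrite mem_filter => /andP[].
have Hlt : forall x, x \in dots ns A -> forall i, i < size ns -> nth 0 x i < nth 0 ns i.
  by move=> x /Hb /boxseqP [].
pose P i c := c < nth 0 ns i /\
    rr (nth 0 ns i) c (nth 0 w i) + rr (nth 0 ns i) c (nth 0 a' i)
    = rr (nth 0 ns i) c (nth 0 w' i) + rr (nth 0 ns i) c (nth 0 a i).
have [cs [_ Hcs]] : exists cs, size cs = size ns /\ forall i, i < size ns -> P i (nth 0 cs i).
  apply: seq_choice => i Hi; rewrite /P.
  have Ha1 := Hlt _ Ha i Hi; have Hw1 := Hlt _ Hw i Hi.
  have Ha2 := Hlt _ Ha' i Hi; have Hw2 := Hlt _ Hw' i Hi.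
  apply: (@oneD _ _ _ _ _ (nth 0 (toroidal ns a w) i)) => //.
  - by rewrite nth_tor // tor_nth_eq.
  - by rewrite Ht nth_tor // tor_nth_eq.
  - by move/hasPn: Hh; apply; rewrite mem_iota add0n.
exists (corner ns cs); split; first by rewrite /corner size_map size_iota.
exists (lift ns cs a), (lift ns cs w), (lift ns cs a'), (lift ns cs w').
have Hcs1 : forall i, i < size ns -> nth 0 cs i < nth 0 ns i by move=> i /Hcs [].
split.
- by rewrite !(lift_window Hcs1) //; apply: Hb.
- by rewrite !lift_periodic.
- split; apply/negP => /eqP.
    by move=> /(lift_inj (Hb _ Ha) (Hb _ Hw)) H; move: Haw; rewrite H eqxx.
  by move=> /(lift_inj (Hb _ Ha') (Hb _ Hw')) H; move: Haw'; rewrite H eqxx.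
- apply/negP => /eqP [] /(lift_inj (Hb _ Ha) (Hb _ Ha')) H1
                       /(lift_inj (Hb _ Hw) (Hb _ Hw')) H2.
  by move: Hne; rewrite H1 H2 eqxx.
- rewrite /diffv; apply/eq_in_map => i; rewrite mem_iota add0n => /= Hi.
  rewrite !nth_lift // /R; have [_ E] := Hcs i Hi; lia.
Qed.
Section PA.
Variables (ns : seq nat) (A : seq nat -> bool) (k : nat) (phi : seq nat -> seq nat).
Hypothesis Hpa : is_perm_array ns A k phi.
Let B1 := boxseq (take k ns).
Let B2 := boxseq (drop k ns).

Lemma pa_k : k < size ns. Proof. by case: Hpa => /andP[]. Qed.

Lemma size_B2 : size B2 = size B1.
Proof.
case: Hpa => _ Hmap Hinj Hsurj _; apply/eqP; rewrite eqn_leq; apply/andP; split.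
  rewrite -(size_map phi B1); apply: uniq_leq_size; first exact: uniq_boxseq.
  by move=> y /Hsurj [x Hx <-]; apply: map_f.
rewrite -(size_map phi B1); apply: uniq_leq_size.
  by rewrite map_inj_in_uniq //; apply: uniq_boxseq.
by move=> y /mapP [x Hx ->]; apply: Hmap.
Qed.

Lemma size_B1elt u : u \in B1 -> size u = k.
Proof. by case/boxseqP => -> _; rewrite size_take pa_k. Qed.

Lemma dot_td d : d \in dots ns A -> take k d \in B1 /\ drop k d = phi (take k d).
Proof.
rewrite mem_filter => /andP [HAd Hd]; case: Hpa => _ _ _ _ HA.
have [H1 H2] := boxseq_td k Hd; split => //.
by move: HAd; rewrite HA // => /eqP.
Qed.

Lemma dots_perm : perm_eq (dots ns A) [seq u ++ phi u | u <- B1].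
Proof.
case: Hpa => Hk Hmap Hinj Hsurj HA.
apply: uniq_perm; first by apply: filter_uniq; apply: uniq_boxseq.
  rewrite map_inj_in_uniq; first exact: uniq_boxseq.
  move=> u v Hu Hv /(congr1 (take k)); rewrite !take_size_cat //.
    exact: size_B1elt.
  exact: size_B1elt.
move=> d; apply/idP/mapP.
  move=> Hd; have [H1 H2] := dot_td Hd; exists (take k d) => //.
  by rewrite -H2 cat_take_drop.
move=> [u Hu ->]; rewrite mem_filter.
have Hsu := size_B1elt Hu.
have Hk' : k <= size ns by apply: ltnW; apply: pa_k.
have Hin : u ++ phi u \in boxseq ns by apply: (boxseq_cat_in Hk' Hu); apply: Hmap.
by rewrite HA // take_size_cat // drop_size_cat // eqxx Hin.
Qed.

Lemma size_dots : size (dots ns A) = size B1.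
Proof. by rewrite (perm_size dots_perm) size_map. Qed.

Definition nz (u : seq nat) := has (fun x => x != 0) u.

Lemma tor_zero a w i : a \in boxseq ns -> w \in boxseq ns -> i < size ns ->
  nth 0 (toroidal ns a w) i = 0 -> nth 0 a i = nth 0 w i.
Proof.
case/boxseqP => _ Ha; case/boxseqP => _ Hw Hi.
rewrite nth_tor // tor_nth_eq; try by [apply: Ha|apply: Hw].
have := Ha i Hi; have := Hw i Hi; case: ifP => ?; lia.
Qed.

Lemma tor_in a w : a \in dots ns A -> w \in dots ns A -> a != w ->
  (toroidal ns a w \in boxseq ns) && in_T ns k (toroidal ns a w).
Proof.
move=> Ha Hw Haw.
have Hba : a \in boxseq ns by move: Ha; rewrite mem_filter => /andP[].
have Hbw : w \in boxseq ns by move: Hw; rewrite mem_filter => /andP[].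
have [Hsa Hla] := boxseqP _ _ Hba; have [Hsw Hlw] := boxseqP _ _ Hbw.
have Hk := pa_k.
have [Ta Da] := dot_td Ha; have [Tw Dw] := dot_td Hw.
have Htk : take k a != take k w.
  by apply: contra Haw => /eqP E; rewrite -(cat_take_drop k a) -(cat_take_drop k w) Da Dw E.
have Hdk : drop k a != drop k w.
  apply: contra Htk => /eqP E; apply/eqP; case: Hpa => _ _ Hinj _ _.
  by apply: Hinj => //; rewrite -Da -Dw.
apply/andP; split.
  apply/boxseqP; split; first by rewrite size_tor.
  move=> i Hi; rewrite nth_tor // ltn_mod.
  by have := Hla i Hi; case: (nth 0 ns i).
set t := toroidal ns a w.
have Hst : size t = size ns by rewrite size_tor.
apply/andP; split.
  apply: contraR Htk => /hasPn H; apply/eqP; apply: (@eq_from_nth _ 0).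
    by rewrite !size_take Hsa Hsw.
  move=> i; rewrite size_take Hsa Hk => Hi.
  have Hm : nth 0 (take k t) i \in take k t by apply: mem_nth; rewrite size_take Hst Hk.
  have := H _ Hm; rewrite negbK nth_take // => /eqP E.
  rewrite !nth_take //; apply: tor_zero => //; exact: ltn_trans Hi Hk.
apply: contraR Hdk => /hasPn H; apply/eqP; apply: (@eq_from_nth _ 0).
  by rewrite !size_drop Hsa Hsw.
move=> i; rewrite size_drop Hsa => Hi.
have Hm : nth 0 (drop k t) i \in drop k t by apply: mem_nth; rewrite size_drop Hst.
have := H _ Hm; rewrite negbK nth_drop // => /eqP E.
rewrite !nth_drop //; apply: tor_zero => //; lia.
Qed.

Lemma zero_in l : all (fun x => 0 < x) l -> nseq (size l) 0 \in boxseq l.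
Proof.
move=> Hl; apply/boxseqP; split; first by rewrite size_nseq.
by move=> i Hi; rewrite nth_nseq Hi; apply: (all_nthP 0 Hl).
Qed.

Lemma count_T : all (fun x => 0 < x) ns ->
  count (in_T ns k) (boxseq ns) <= (size B1).-1 * (size B1).-1.
Proof.
move=> Hpos; have Hk := pa_k.
rewrite -size_filter.
have Hle : forall l, all (fun x => 0 < x) l -> count nz (boxseq l) <= (size (boxseq l)).-1.
  move=> l Hl; have := count_predC nz (boxseq l).
  have : 0 < count (predC nz) (boxseq l).
    rewrite -has_count; apply/hasP; exists (nseq (size l) 0); first exact: zero_in.
    by rewrite /= /nz; apply/hasPn => x; rewrite mem_nseq => /andP[_ /eqP ->].
  lia.
have Hp1 : all (fun x => 0 < x) (take k ns).
  by apply/allP => x /mem_take; apply/allP.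
have Hp2 : all (fun x => 0 < x) (drop k ns).
  by apply/allP => x /mem_drop; apply/allP.
apply: (@leq_trans (size [seq u ++ v | u <- filter nz B1, v <- filter nz B2])).
  apply: uniq_leq_size; first by apply: filter_uniq; apply: uniq_boxseq.
  move=> h; rewrite mem_filter => /andP [HT Hh].
  have [H1 H2] := boxseq_td k Hh.
  rewrite -(cat_take_drop k h); apply: allpairs_f; rewrite mem_filter /nz.
    by case/andP: HT => -> _.
  by case/andP: HT => _ ->.
rewrite size_allpairs !size_filter; apply: leq_mul; [exact: Hle|rewrite -size_B2; exact: Hle].
Qed.
End PA.
Lemma arith_contra (HA sL c1 c2 c3 Q Q' n : nat) : 0 < n -> Q' = Q + n.-1 -> Q' = HA + sL ->
  c3 = c1 + c2 -> c3 <= Q -> sL <= c2 -> (HA%:Z - c1%:Z < n%:Z - 1)%R -> False.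
Proof. lia. Qed.

Unset Implicit Arguments.

Theorem mainTheorem6 (ns : seq nat) (A : seq nat -> bool)
    (k : nat) (phi : seq nat -> seq nat) :
  2 <= size ns ->
  all (fun x => 2 <= x) ns ->
  is_perm_array ns A k phi ->
  ((card_HA ns A)%:Z - (card_HL ns k)%:Z < (parray_order ns k)%:Z - 1)%R ->
  exists c : seq int, size c = size ns /\ window_has_repeat ns A c.
Proof.
move=> Hm Hpos2 Hpa Hlt.
have Hpos : all (fun x => 0 < x) ns by apply/allP => x /(allP Hpos2) /ltnW.
have Hn : size (boxseq (take k ns)) = parray_order ns k by rewrite size_boxseq.
have Hn1 : 0 < size (boxseq (take k ns)).
  have : nseq (size (take k ns)) 0 \in boxseq (take k ns).
    by apply: zero_in; apply/allP => x /mem_take; apply/allP.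
  by case: (boxseq _).
set D := dots ns A.
have UD : uniq D by apply: filter_uniq; apply: uniq_boxseq.
have SD : size D = parray_order ns k by rewrite -Hn (size_dots Hpa).
set P := [seq (a, w) | a <- D, w <- D].
set tor2 := fun p : seq nat * seq nat => toroidal ns p.1 p.2.
set L := [seq p <- P | (p.1 != p.2) && ~~ has_half ns (tor2 p)].
have E1 : count (fun p : seq nat * seq nat => p.1 != p.2) P = card_HA ns A + size L.
  rewrite (count_split _ (fun p => has_half ns (tor2 p))) /card_HA size_filter size_filter.
  by [].
have E2 := count_pairs UD; rewrite -/P SD in E2.
have E3 := count_split (in_T ns k) (has_half ns) (boxseq ns).
have E4 := count_T Hpa Hpos; rewrite Hn in E4.
have UL : uniq L.
  apply: filter_uniq; apply: allpairs_uniq => //.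
  by move=> [x1 y1] [x2 y2] _ _ /= [-> ->].
case: (boolP (uniq (map tor2 L))) => U.
  have : size (map tor2 L) <= count (fun h => in_T ns k h && ~~ has_half ns h) (boxseq ns).
    rewrite -size_filter; apply: uniq_leq_size => // h /mapP [p Hp ->].
    move: Hp; rewrite mem_filter => /andP [/andP [Hne Hh] HP].
    move: Hne Hh; case/allpairsP: HP => [[a w] [/= Ha Hw ->]] /= Hne Hh.
    have /andP [H1 H2] := tor_in Hpa Ha Hw Hne.
    by rewrite mem_filter H1 H2 Hh.
  rewrite size_map /card_HL size_filter in Hlt *.
  move=> Hle.
  have E12 : parray_order ns k * (parray_order ns k).-1 = card_HA ns A + size L.
    by rewrite -E1; symmetry; exact: E2.
  rewrite Hn in Hn1.
  have Hsq : parray_order ns k * (parray_order ns k).-1 =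
     (parray_order ns k).-1 * (parray_order ns k).-1 + (parray_order ns k).-1.
    by case: (parray_order ns k) => //= x; rewrite mulSn addnC.
  move: Hsq E12 E3 E4 Hle Hlt.
  generalize ((parray_order ns k).-1 * (parray_order ns k).-1) => Q.
  generalize (parray_order ns k * (parray_order ns k).-1) => Q'.
  set c1 := count (fun h : seq nat => in_T ns k h && has_half ns h) (boxseq ns).
  set c2 := count (fun h : seq nat => in_T ns k h && ~~ has_half ns h) (boxseq ns).
  set c3 := count (in_T ns k) (boxseq ns).
  move=> H1 H2 H3 H4 H5 H6; exfalso; exact: (arith_contra Hn1 H1 H2 H3 H4 H5 H6).
set p0 : seq nat * seq nat := ([::], [::]).
case/(uniqPn (tor2 p0)): U => i [j []]; rewrite size_map => Hij Hj.
have Hi : i < size L by apply: ltn_trans Hij Hj.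
rewrite !(nth_map p0) //.
have Hne : nth p0 L i != nth p0 L j by rewrite nth_uniq // ltn_eqF.
have Hp := mem_nth p0 Hi; have Hp' := mem_nth p0 Hj.
move: Hne.
case: (nth p0 L i) Hp => a w; case: (nth p0 L j) Hp' => a' w'.
rewrite !mem_filter /= => /andP [/andP [Haw' Hh'] HP'] /andP [/andP [Haw Hh] HP] Hne Ht.
case/allpairsP: HP => [[x y] [/= Hx Hy [Ex Ey]]]; subst x y.
case/allpairsP: HP' => [[x y] [/= Hx' Hy' [Ex Ey]]]; subst x y.
exact: (geom Hpos Hx Hy Hx' Hy' Haw Haw' Hne Ht Hh).
Qed.
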